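(* Let $k$ be a positive integer. In any prime $k$th-power distance labeling of the complete graph $K_4$, the four vertex labels do not all have the same parity.
   Context: A prime $k$th-power distance labeling of a graph $G$ is an injective map $L:V(G)\to\mathbb{Z}$ such that for every edge $uv$ of $G$, $|L(u)-L(v)|=p^j$ for some prime $p$ and some positive integer $j\le k$. *)

(* Defs.v *)
From mathcomp Require Import all_boot all_order all_algebra.
Set Implicit Arguments. Unset Strict Implicit. Unset Printing Implicit Defensive.
Import Order.TTheory GRing.Theory Num.Theory.

Definition prime_kth_power_distance_labeling (T : finType) (adj : rel T)
    (k : nat) (L : T -> int) : Prop :=
  injective L /\
  forall u v : T, adj u v ->
    exists p j : nat, [/\ prime p, (0 < j)%N, (j <= k)%N &
      `|L u - L v|%R = Posz (p ^ j)].

Definition complete_adj (n : nat) : rel 'I_n := fun u v => u != v.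

(* Main.v *)
Require Import Defs.
From mathcomp Require Import all_boot all_order all_algebra zify.
Import Order.TTheory GRing.Theory Num.Theory.

Lemma pow2sum a b c : 2 ^ a + 2 ^ b = 2 ^ c -> a = b.
Proof.
elim: a b c => [|a IH] [|b] [|c] //=; rewrite ?expnS; try lia.
move=> h; congr S; apply: (IH b c); lia.
Qed.

Lemma key (a b c : nat) : (Posz (expn 2 a) + Posz (expn 2 b) = Posz (expn 2 c))%R -> (Posz (expn 2 a) = Posz (expn 2 b))%R.
Proof. move=> h; have h' : addn (expn 2 a) (expn 2 b) = expn 2 c by lia. by rewrite (@pow2sum a b c h'). Qed.

Lemma P3 (x y z : int) a b c : x != y -> y != z -> x != z ->
  `|x - y|%R = Posz (expn 2 a) -> `|y - z|%R = Posz (expn 2 b) -> `|x - z|%R = Posz (expn 2 c) ->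
  (2 * x = y + z \/ 2 * y = x + z \/ 2 * z = x + y)%R.
Proof.
move=> n1 n2 n3 h1 h2 h3.
have [e|[e|e]] : (Posz (expn 2 a) + Posz (expn 2 b) = Posz (expn 2 c) \/ Posz (expn 2 a) + Posz (expn 2 c) = Posz (expn 2 b)
  \/ Posz (expn 2 b) + Posz (expn 2 c) = Posz (expn 2 a))%R by lia.
- have := @key a b c e; lia.
- have := @key a c b e; lia.
- have := @key b c a e; lia.
Qed.

Lemma pair_pow2 (x y : int) (k : nat) : x != y -> (x %% 2)%Z = (y %% 2)%Z ->
  (exists p j : nat, [/\ prime p, (0 < j)%N, (j <= k)%N &
      `|x - y|%R = Posz (p ^ j)]) -> exists e : nat, `|x - y|%R = Posz (expn 2 e).
Proof.
move=> nxy hm [p [j [pp j0 _ h]]].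
have ev : (p ^ j) %% 2 = 0.
  set n := p ^ j in h *. lia.
have : ~~ odd (p ^ j) by apply/negP => o; move: ev; rewrite modn2 o.
move=> o; have op : ~~ odd p by move: o; rewrite oddX; case: (j) j0.
have [p2|] := even_prime pp; last by rewrite (negbTE op).
by exists j; rewrite h p2.
Qed.

Theorem mainTheorem9 (k : nat) (hk : (0 < k)%N) (L : 'I_4 -> int) :
  prime_kth_power_distance_labeling (@complete_adj 4) k L ->
  exists u v : 'I_4, (L u %% 2)%Z != (L v %% 2)%Z.
Proof.
move=> [Linj Hadj].
pose i0 := @Ordinal 4 0 isT. pose i1 := @Ordinal 4 1 isT.
pose i2 := @Ordinal 4 2 isT. pose i3 := @Ordinal 4 3 isT.
have [e01|] := eqVneq (L i0 %% 2)%Z (L i1 %% 2)%Z; last by eexists; eexists; eauto.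
have [e02|] := eqVneq (L i0 %% 2)%Z (L i2 %% 2)%Z; last by eexists; eexists; eauto.
have [e03|] := eqVneq (L i0 %% 2)%Z (L i3 %% 2)%Z; last by eexists; eexists; eauto.
exfalso.
have D : forall i j : 'I_4, i != j -> L i != L j.
  by move=> i j nij; apply/negP => /eqP /Linj /eqP; rewrite (negbTE nij).
have P : forall i j : 'I_4, i != j -> (L i %% 2)%Z = (L j %% 2)%Z ->
    exists e : nat, `|L i - L j|%R = Posz (expn 2 e).
  by move=> i j nij hm; apply: (@pair_pow2 _ _ k) => //; [exact: D | exact: Hadj].
have [a01 h01] := P i0 i1 isT e01.
have [a02 h02] := P i0 i2 isT e02.
have [a03 h03] := P i0 i3 isT e03.
have [a12 h12] := P i1 i2 isT (etrans (esym e01) e02).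
have [a13 h13] := P i1 i3 isT (etrans (esym e01) e03).
have [a23 h23] := P i2 i3 isT (etrans (esym e02) e03).
have d01 := D i0 i1 isT. have d02 := D i0 i2 isT. have d03 := D i0 i3 isT.
have d12 := D i1 i2 isT. have d13 := D i1 i3 isT. have d23 := D i2 i3 isT.
have T1 := @P3 _ _ _ _ _ _ d01 d12 d02 h01 h12 h02.
have T2 := @P3 _ _ _ _ _ _ d01 d13 d03 h01 h13 h03.
have T3 := @P3 _ _ _ _ _ _ d02 d23 d03 h02 h23 h03.
have T4 := @P3 _ _ _ _ _ _ d12 d23 d13 h12 h23 h13.
move: T1 T2 T3 T4 d01 d02 d03 d12 d13 d23.
set x0 := L i0; set x1 := L i1; set x2 := L i2; set x3 := L i3.
clear. lia.
Qed.
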